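(* Suppose the noise condition $\mathbb P_X(0<\Delta(X)\le\delta)\le(\gamma\delta/B)^\alpha$ for all $\delta>0$ holds for some $\alpha,\gamma\ge0$, and $\mathbb P(|\mathcal Z^*(X)|>1)=0$. Then for every policy $\pi:\mathbb R^p\to\mathcal Z^\angle$, $$d(\pi^*,\pi)\le 2\,d_\Delta(\pi^*,\pi),\qquad d_\Delta(\pi^*,\pi)\le c_1\, d(\pi^*,\pi)^{\frac{\alpha}{\alpha+1}},$$ where $c_1=(\alpha\gamma^\alpha)^{-\frac{\alpha}{\alpha+1}}(\alpha+1)\gamma^\alpha$.
   Context: Setting: $X\in\mathbb R^p$, $Y\in\mathbb R^d$ with $\|Y\|\le1$, $f^*(x)=\mathbb E[Y\mid X=x]$. $\mathcal Z=\{z:Az\le b\}$ is a polytope with $\sup_{z\in\mathcal Z}\|z\|\le B$ and finite set of extreme points $\mathcal Z^\angle$; $\mathcal Z^*(x)=\arg\min_{z\in\mathcal Z}f^*(x)^\top z$, $\pi^*(x)\in\mathcal Z^*(x)$; $\Delta(x)=\inf_{z\in\mathcal Z^\angle\setminus\mathcal Z^*(x)}f^*(x)^\top z-\inf_{z\in\mathcal Z}f^*(x)^\top z$ if $\mathcal Z^*(x)\ne\mathcal Z$, else $0$. For policies $\pi,\pi':\mathbb R^p\to\mathcal Z^\angle$, $d(\pi,\pi')=\frac1B\mathbb E_X[f^*(X)^\top(\pi'(X)-\pi(X))]$ and $d_\Delta(\pi,\pi')=\mathbb P_X(\pi(X)\ne\pi'(X))$. *)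

(* Defs.v *)
From HB Require Import structures.
From mathcomp Require Import all_boot all_order all_algebra.
From mathcomp Require Import all_classical all_reals all_analysis.
Set Implicit Arguments. Unset Strict Implicit. Unset Printing Implicit Defensive.
Import Order.TTheory GRing.Theory Num.Theory.
Local Open Scope classical_set_scope.
Local Open Scope ring_scope.

Section defs.
Variable R : realType.

Definition dotv n (u v : 'cV[R]_n) : R := \sum_(i < n) u i 0 * v i 0.
Definition enorm n (v : 'cV[R]_n) : R := Num.sqrt (dotv v v).

Definition polytope m d (A : 'M[R]_(m, d)) (b : 'cV[R]_m) : set 'cV[R]_d :=
  [set z | forall i : 'I_m, (A *m z) i 0 <= b i 0].

Definition extreme_points d (S : set 'cV[R]_d) : set 'cV[R]_d :=
  [set z | S z /\ forall (x y : 'cV[R]_d) (t : R), S x -> S y -> 0 < t < 1 ->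
            z = t *: x + (1 - t) *: y -> x = y].

(* Z^*(c) = argmin_{z in Z} c^T z  (c plays the role of f^*(x)) *)
Definition argminZ d (Z : set 'cV[R]_d) (c : 'cV[R]_d) : set 'cV[R]_d :=
  [set z | Z z /\ forall z', Z z' -> dotv c z <= dotv c z'].

Definition gap d (Z : set 'cV[R]_d) (c : 'cV[R]_d) : R :=
  if `[< argminZ Z c = Z >] then 0
  else inf [set dotv c z | z in extreme_points Z `\` argminZ Z c]
       - inf [set dotv c z | z in Z].

End defs.

(* Main.v *)
Require Import Defs.
From HB Require Import structures.
From mathcomp Require Import all_boot all_order all_algebra.
From mathcomp Require Import all_classical all_reals all_analysis.
From mathcomp Require Import ring lra measurable_realfun.
Set Implicit Arguments. Unset Strict Implicit. Unset Printing Implicit Defensive.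
Import Order.TTheory GRing.Theory Num.Theory.
Local Open Scope classical_set_scope.
Local Open Scope ring_scope.

Section dot.
Variable R : realType.
Variable n : nat.
Implicit Types u v w c : 'cV[R]_n.

Lemma dotvC u v : dotv u v = dotv v u.
Proof. by apply: eq_bigr => i _; rewrite mulrC. Qed.
Lemma dotvDr c u v : dotv c (u + v) = dotv c u + dotv c v.
Proof. by rewrite /dotv -big_split; apply: eq_bigr => i _; rewrite !mxE mulrDr. Qed.
Lemma dotvZr c s u : dotv c (s *: u) = s * dotv c u.
Proof. by rewrite /dotv mulr_sumr; apply: eq_bigr => i _; rewrite !mxE mulrCA. Qed.
Lemma dotvNr c u : dotv c (- u) = - dotv c u.
Proof. by rewrite -scaleN1r dotvZr mulN1r. Qed.
Lemma dotvBr c u v : dotv c (u - v) = dotv c u - dotv c v.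
Proof. by rewrite dotvDr dotvNr. Qed.
Lemma dotvDl c u v : dotv (u + v) c = dotv u c + dotv v c.
Proof. by rewrite dotvC dotvDr !(dotvC c). Qed.
Lemma dotvZl c s u : dotv (s *: u) c = s * dotv u c.
Proof. by rewrite dotvC dotvZr dotvC. Qed.
Lemma dotvBl c u v : dotv (u - v) c = dotv u c - dotv v c.
Proof. by rewrite dotvC dotvBr !(dotvC c). Qed.
Lemma dotv_ge0 u : 0 <= dotv u u.
Proof. by apply: sumr_ge0 => i _; rewrite -expr2 sqr_ge0. Qed.
Lemma dotv_gt0 u : u != 0 -> 0 < dotv u u.
Proof.
move=> u0; have [i ui] : exists i, u i 0 != 0.
  apply/existsP; apply: contraNT u0; rewrite negb_exists => /forallP H.
  apply/eqP/matrixP => i j; rewrite ord1 mxE; exact/eqP/negbNE/H.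
rewrite /dotv (bigD1 i) //= ltr_pwDl ?sumr_ge0 // => [|k _]; last by rewrite -expr2 sqr_ge0.
by rewrite -expr2 lt0r sqr_ge0 andbT sqrf_eq0.
Qed.
Lemma enorm_sq u : enorm u ^+ 2 = dotv u u.
Proof. by rewrite /enorm sqr_sqrtr // dotv_ge0. Qed.
Lemma enorm_ge0 u : 0 <= enorm u.
Proof. exact: sqrtr_ge0. Qed.

Lemma dot_bound c u (B : R) : 0 < B -> enorm c <= 1 -> enorm u <= B -> dotv c u <= B.
Proof.
move=> B0 hc hu.
have key : 2 * dotv c u <= B * dotv c c + B^-1 * dotv u u.
  have : 0 <= dotv (B *: c - u) (B *: c - u) by apply: dotv_ge0.
  rewrite !dotvBr !dotvBl !dotvZl !dotvZr (dotvC u c) => H.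
  have HB : B^-1 * (B * (B * dotv c c) - B * dotv c u - (B * dotv c u - dotv u u)) >= 0.
    by rewrite mulr_ge0 // invr_ge0 ltW.
  move: HB; rewrite !mulrDr !mulrN !mulrA mulVf ?gt_eqF // !mul1r => HB.
  move: HB; rewrite mulrBr mulrA mulVf ?gt_eqF // mul1r => HB; lra.
have h1 : dotv c c <= 1 by rewrite -enorm_sq; have := enorm_ge0 c; nra.
have h2 : dotv u u <= B^+2 by rewrite -enorm_sq; have := enorm_ge0 u; nra.
have h3 : B * dotv c c <= B by nra.
have h4 : B^-1 * dotv u u <= B.
  rewrite ler_pdivrMl //; nra.
lra.
Qed.
End dot.

Section finmin.
Variable R : realType.

Lemma seq_min (T : eqType) (s : seq T) (f : T -> R) : s != [::] ->
  exists2 x, x \in s & forall y, y \in s -> f x <= f y.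
Proof.
elim: s => [//|a s IH] _.
case: (eqVneq s [::]) => [->|sn].
  by exists a; rewrite ?mem_head // => y; rewrite inE => /eqP ->.
have [x xs hx] := IH sn.
case: (lerP (f a) (f x)) => fa.
  exists a; first exact: mem_head.
  move=> y; rewrite inE => /predU1P [->//|ys]; exact: le_trans fa (hx _ ys).
exists x; first by rewrite inE xs orbT.
move=> y; rewrite inE => /predU1P [->|ys]; [exact: ltW | exact: hx].
Qed.

Lemma fin_min (T : eqType) (S : set T) (f : T -> R) : finite_set S -> S !=set0 ->
  exists x, S x /\ forall y, S y -> f x <= f y.
Proof.
move=> /finite_seqP [s ->] [z zs].
have sn : s != [::] by apply: contraTneq zs => ->.
by have [x xs hx] := seq_min f sn; exists x; split => // y ys; apply: hx.
Qed.

Lemma inf_min (T : Type) (S : set T) (f : T -> R) x : S x ->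
  (forall y, S y -> f x <= f y) -> inf [set f z | z in S] = f x.
Proof.
move=> Sx hx; apply/eqP; rewrite eq_le; apply/andP; split.
  have hl : has_lbound [set f z | z in S] by exists (f x) => _ [y Sy <-]; exact: hx.
  by apply: (ge_inf hl); exists x.
by apply: lb_le_inf; [exists (f x), x | move=> _ [y Sy <-]; exact: hx].
Qed.
End finmin.

Section poly.
Variable R : realType.
Variables (d m : nat) (A : 'M[R]_(m, d)) (b : 'cV[R]_m) (B : R).
Hypothesis hB : forall z, polytope A b z -> enorm z <= B.
Local Notation Z := (polytope A b).
Local Notation V := (extreme_points (polytope A b)).
Implicit Types (z u c v w : 'cV[R]_d) (s : R).

Definition slack (z : 'cV[R]_d) := #|[pred i : 'I_m | (A *m z) i 0 < b i 0]|.

Lemma Amul z s u i : (A *m (z + s *: u)) i 0 = (A *m z) i 0 + s * (A *m u) i 0.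
Proof. by rewrite mulmxDr -scalemxAr !mxE. Qed.

Lemma dir_pos z u : Z z -> u != 0 -> exists i, 0 < (A *m u) i 0.
Proof.
move=> Zz u0; apply/not_existsP => H.
have Hs s : 0 <= s -> dotv (z + s *: u) (z + s *: u) <= B ^+ 2.
  move=> s0; have Zs : Z (z + s *: u).
    move=> i; rewrite Amul; have ui : (A *m u) i 0 <= 0 by rewrite leNgt; apply/negP/H.
    have := Zz i; nra.
  have := hB Zs; rewrite -enorm_sq; have := enorm_ge0 (z + s *: u); nra.
have q0 := dotv_gt0 u0.
set q := dotv u u in q0.
set p := dotv z u.
have B0 : 0 <= B by apply: le_trans (hB Zz); exact: enorm_ge0.
pose s := (2 * `|p| + B ^+ 2 + 1) / q + 1.
have s1 : 1 <= s.
  rewrite /s lerDr divr_ge0 // ?ltW //.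
  have := normr_ge0 p; have := sqr_ge0 B; lra.
have sq : s * q = 2 * `|p| + B ^+ 2 + 1 + q by rewrite /s mulrDl divfK ?gt_eqF // mul1r.
have := Hs s (le_trans ler01 s1).
rewrite !dotvDr !dotvDl !dotvZr !dotvZl (dotvC u z) -/p -/q.
have := dotv_ge0 z; have : - `|p| <= p by rewrite lerNl -normrN ler_norm.
move=> hp hz hh.
have : s * s * q >= s * (2 * `|p| + B ^+ 2 + 1) by rewrite -mulrA sq; nra.
have := normr_ge0 p. nra.
Qed.

Lemma step z u : Z z -> u != 0 ->
  (forall i, (A *m z) i 0 = b i 0 -> (A *m u) i 0 = 0) ->
  exists s, 0 < s /\ Z (z + s *: u) /\ (slack (z + s *: u) < slack z)%N.
Proof.
move=> Zz u0 tight.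
have [i0 Pi0] := dir_pos Zz u0.
pose F i := (b i 0 - (A *m z) i 0) / (A *m u) i 0.
case: (@arg_minP _ _ _ i0 (fun i => 0 < (A *m u) i 0) F Pi0) => j Pj minj.
have slj : (A *m z) j 0 < b j 0.
  rewrite lt_neqAle Zz andbT; apply/eqP => /tight; move: Pj => /[swap] ->; by rewrite ltxx.
have s0 : 0 < F j by rewrite /F divr_gt0 // subr_gt0.
exists (F j); split => //; split.
  move=> i; rewrite Amul.
  case: (ltP 0 ((A *m u) i 0)) => ui.
    have := minj i ui; rewrite /F => H.
    have : (b j 0 - (A *m z) j 0) / (A *m u) j 0 * (A *m u) i 0 <= b i 0 - (A *m z) i 0.
      by rewrite -ler_pdivlMr.
    rewrite /F; lra.
  have := Zz i; nra.
rewrite /slack; apply: proper_card; apply/properP; split.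
  apply/fintype.subsetP => i; rewrite !inE Amul => H.
  rewrite lt_neqAle Zz andbT; apply/eqP => E.
  by move: H; rewrite (tight i E) mulr0 addr0 E ltxx.
exists j; rewrite !inE ?slj // Amul /F divfK ?gt_eqF //.
by rewrite addrC subrK ltxx.
Qed.

Lemma Asub (x y : 'cV[R]_d) i : (A *m (x - y)) i 0 = (A *m x) i 0 - (A *m y) i 0.
Proof. by rewrite mulmxBr !mxE. Qed.
Lemma ANeg (x : 'cV[R]_d) i : (A *m (- x)) i 0 = - (A *m x) i 0.
Proof. by rewrite mulmxN !mxE. Qed.

Lemma vert_prop n z : (slack z < n)%N -> Z z -> forall c,
  (exists v, V v /\ dotv c v <= dotv c z) /\
  (exists v, V v /\ dotv c z <= dotv c v) /\
  (forall v0, (forall z', Z z' -> dotv c z <= dotv c z') -> z <> v0 ->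
     exists v, V v /\ v <> v0 /\ forall z', Z z' -> dotv c v <= dotv c z').
Proof.
elim: n z => [//|n IH] z sz Zz c.
have [Vz|nVz] := pselect (V z).
  split; first by exists z.
  split; first by exists z.
  by move=> v0 opt zv0; exists z.
have : ~ (forall (x y : 'cV[R]_d) (t : R), Z x -> Z y -> 0 < t < 1 ->
            z = t *: x + (1 - t) *: y -> x = y) by move=> H; apply: nVz.
move=> /existsNP [x /existsNP [y /existsNP [t]]].
move=> /not_implyP [Zx /not_implyP [Zy /not_implyP [/andP [t0 t1] /not_implyP [ze xy]]]].
pose u := x - y.
have u0 : u != 0 by rewrite subr_eq0; apply/eqP.
have lin i : (A *m z) i 0 = t * (A *m x) i 0 + (1 - t) * (A *m y) i 0.
  by rewrite ze mulmxDr -!scalemxAr !mxE.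
have tight i : (A *m z) i 0 = b i 0 -> (A *m u) i 0 = 0.
  move=> E; have := lin i; rewrite E => L.
  have := Zx i; have := Zy i => hy hx.
  have ex : (A *m x) i 0 = b i 0 by nra.
  have ey : (A *m y) i 0 = b i 0 by nra.
  by rewrite /u Asub ex ey subrr.
have [s1 [s10 [Z1 sl1]]] := step Zz u0 tight.
have u0' : - u != 0 by rewrite oppr_eq0.
have tight' i : (A *m z) i 0 = b i 0 -> (A *m (- u)) i 0 = 0.
  by move=> /tight; rewrite ANeg => ->; rewrite oppr0.
have [s2 [s20 [Z2 sl2]]] := step Zz u0' tight'.
have IH1 := IH _ (leq_trans sl1 sz) Z1 c.
have IH2 := IH _ (leq_trans sl2 sz) Z2 c.
have d1 : dotv c (z + s1 *: u) = dotv c z + s1 * dotv c u by rewrite dotvDr dotvZr.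
have d2 : dotv c (z + s2 *: - u) = dotv c z - s2 * dotv c u by rewrite dotvDr dotvZr dotvNr mulrN.
case: IH1 => [[v1 [Vv1 h1]] [[w1 [Vw1 k1]] o1]].
case: IH2 => [[v2 [Vv2 h2]] [[w2 [Vw2 k2]] o2]].
split.
  case: (lerP (dotv c u) 0) => cu.
    exists v1; split => //; rewrite (le_trans h1) // d1; nra.
  exists v2; split => //; rewrite (le_trans h2) // d2; nra.
split.
  case: (lerP 0 (dotv c u)) => cu.
    exists w1; split => //; rewrite (le_trans _ k1) // d1; nra.
  exists w2; split => //; rewrite (le_trans _ k2) // d2; nra.
move=> v0 opt zv0.
have cu0 : dotv c u = 0.
  have := opt _ Z1; have := opt _ Z2; rewrite d1 d2 => p2 p1.
  apply/eqP; rewrite eq_le; apply/andP; split; nra.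
have op1 : forall z', Z z' -> dotv c (z + s1 *: u) <= dotv c z'.
  by move=> z' Zz'; rewrite d1 cu0 mulr0 addr0; exact: opt.
have op2 : forall z', Z z' -> dotv c (z + s2 *: - u) <= dotv c z'.
  by move=> z' Zz'; rewrite d2 cu0 mulr0 subr0; exact: opt.
have z12 : z + s1 *: u <> z + s2 *: - u.
  move=> /addrI /eqP; rewrite scalerN -subr_eq0 opprK -scalerDl scaler_eq0.
  by rewrite (negbTE u0) orbF gt_eqF // addr_gt0.
have [e1|ne1] := pselect (z + s1 *: u = v0).
  apply: o2 => // e2; apply: z12; by rewrite e1 e2.
exact: o1.
Qed.

Definition Vopt c v := V v /\ forall v', V v' -> dotv c v <= dotv c v'.

Lemma VZ v : V v -> Z v. Proof. by case. Qed.

Lemma lower z c : Z z -> exists v, V v /\ dotv c v <= dotv c z.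
Proof. by move=> Zz; case: (vert_prop (ltnSn _) Zz c). Qed.
Lemma upper z c : Z z -> exists v, V v /\ dotv c z <= dotv c v.
Proof. by move=> Zz; case: (vert_prop (ltnSn _) Zz c) => _ []. Qed.

Lemma Vopt_argmin c v : V v -> (Vopt c v <-> argminZ Z c v).
Proof.
move=> Vv; split.
  move=> [_ h]; split; first exact: VZ.
  by move=> z' Zz'; have [w [Vw hw]] := lower c Zz'; apply: le_trans (h _ Vw) hw.
by move=> [_ h]; split => // v' Vv'; apply: h; exact: VZ.
Qed.

Lemma U_char c : (exists z1 z2, argminZ Z c z1 /\ argminZ Z c z2 /\ z1 <> z2) <->
  exists v1 v2, Vopt c v1 /\ Vopt c v2 /\ v1 <> v2.
Proof.
split; last first.
  move=> [v1 [v2 [q1 [q2 ne]]]]; exists v1, v2; split; last split => //.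
    by case: (q1) => Vv1 _; apply/(Vopt_argmin c Vv1).
  by case: (q2) => Vv2 _; apply/(Vopt_argmin c Vv2).
move=> [z1 [z2 [[Z1 q1] [[Z2 q2] ne]]]].
have [v0 [Vv0 h0]] := lower c Z1.
have ov0 : argminZ Z c v0 by split; [exact: VZ | move=> z' Zz'; exact: le_trans h0 (q1 _ Zz')].
have [e1|ne1] := pselect (z1 = v0).
  have [_ [_ p3]] := vert_prop (ltnSn _) Z2 c.
  have [v [Vv [vv0 ov]]] := p3 v0 q2 (fun e => ne (etrans e1 (esym e))).
  exists v0, v; split; first by apply/(Vopt_argmin c Vv0).
  split; first by apply/(Vopt_argmin c Vv); split => //; exact: VZ.
  exact: nesym.
have [_ [_ p3]] := vert_prop (ltnSn _) Z1 c.
have [v [Vv [vv0 ov]]] := p3 v0 q1 ne1.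
exists v0, v; split; first by apply/(Vopt_argmin c Vv0).
split; first by apply/(Vopt_argmin c Vv); split => //; exact: VZ.
exact: nesym.
Qed.

Lemma gap_allopt c : (forall v, V v -> Vopt c v) -> gap Z c = 0.
Proof.
move=> H; rewrite /gap asboolT //; apply/seteqP; split => [z [] //|z Zz].
split => // z' Zz'.
have [v [Vv hv]] := upper c Zz.
have [w [Vw hw]] := lower c Zz'.
have [_ hv'] := H v Vv.
exact: le_trans hv (le_trans (hv' _ Vw) hw).
Qed.

Lemma nVopt_gt c (v0 v1 : 'cV[R]_d) : Vopt c v0 -> V v1 -> ~ Vopt c v1 -> dotv c v0 < dotv c v1.
Proof.
move=> [V0 h0] V1 n1; rewrite ltNge; apply/negP => le10; apply: n1; split => // v' Vv'.
exact: le_trans le10 (h0 _ Vv').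
Qed.

Lemma gap_char c v : finite_set V -> V v -> ~ Vopt c v ->
  exists v0 v1, Vopt c v0 /\ V v1 /\ ~ Vopt c v1 /\
    (forall w, V w -> ~ Vopt c w -> dotv c v1 <= dotv c w) /\
    gap Z c = dotv c v1 - dotv c v0.
Proof.
move=> fin Vv nv.
have [v0 [Vv0 h0]] := fin_min (fun z => dotv c z) fin (ex_intro _ v Vv).
have q0 : Vopt c v0 by [].
have finN : finite_set (V `\` argminZ Z c) by exact: finite_setD.
have [v1 [[Vv1 nv1] h1]] := fin_min (fun z => dotv c z) finN (ex_intro _ v (conj Vv (fun H => nv (proj2 (Vopt_argmin c Vv) H)))).
exists v0, v1; split => //; split => //; split.
  by move=> H; apply: nv1; apply/(Vopt_argmin c Vv1).
split.
  by move=> w Vw nw; apply: h1; split => // H; apply: nw; apply/(Vopt_argmin c Vw).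
rewrite /gap asboolF; last first.
  move=> E; apply: nv; apply/(Vopt_argmin c Vv); rewrite E; exact: VZ.
congr (_ - _).
  by apply: inf_min => //; split.
apply: inf_min; first exact: VZ.
by move=> y Zy; case: (proj1 (Vopt_argmin c Vv0) q0) => _; apply.
Qed.
End poly.

Section final.
Variable R : realType.

Lemma powR_pos (x y : R) : 0 < x -> powR x y = expR (y * ln x).
Proof. by move=> x0; rewrite /powR gt_eqF. Qed.

Lemma final (pS e B al ga : R) : 0 <= pS <= 1 -> 0 <= e -> 0 < B -> 0 <= al -> 0 <= ga ->
  (forall dl, 0 < dl -> pS <= powR (ga * dl / B) al + e / dl) ->
  pS <= powR (al * powR ga al) (- (al / (al + 1))) * (al + 1) * powR ga al
        * powR (e / B) (al / (al + 1)).
Proof.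
move=> /andP [pS0 pS1] e0 B0 al0 ga0 H.
have [->|alp] := eqVneq al 0.
  by rewrite !(mul0r, powRr0, oppr0, add0r, mulr1, mul1r).
have alg : 0 < al by rewrite lt0r alp.
have al1 : al + 1 != 0 by rewrite gt_eqF // ltr_pwDr.
have [ga00|gap] := eqVneq ga 0.
  subst ga; rewrite powR0 // mulr0 mul0r.
  rewrite leNgt; apply/negP => pSp.
  have dlp : 0 < 2 * e / pS + 1 by rewrite ltr_pwDr // divr_ge0 ?mulr_ge0 // ltW.
  have := H _ dlp; rewrite !mul0r powR0 // add0r => h.
  have : e / (2 * e / pS + 1) < pS.
    rewrite ltr_pdivrMr // mulrDr mulr1 mulrC divfK ?gt_eqF //.
    lra.
  lra.
have gag : 0 < ga by rewrite lt0r gap.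
have [e00|ep] := eqVneq e 0.
  subst e; rewrite mul0r powR0 ?mulr0 ?mulf_neq0 ?invr_neq0 //.
  rewrite leNgt; apply/negP => pSp.
  pose dl := B / ga * powR (pS / 2) (al^-1).
  have dlp : 0 < dl by rewrite /dl mulr_gt0 ?divr_gt0 // powR_gt0 // divr_gt0.
  have := H _ dlp; rewrite mul0r addr0 /dl.
  have -> : ga * (B / ga * powR (pS / 2) al^-1) / B = powR (pS / 2) al^-1.
    by field; rewrite gt_eqF.
  rewrite -powRrM mulVf // powRr1; last by rewrite divr_ge0.
  lra.
have eg : 0 < e by rewrite lt0r ep.
pose t := (ln e - ln al - al * ln ga + al * ln B) / (al + 1).
have := H (expR t) (expR_gt0 t).
have gdB : 0 < ga * expR t / B by rewrite divr_gt0 ?mulr_gt0 ?expR_gt0.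
have ag : 0 < al * powR ga al by rewrite mulr_gt0 // powR_gt0.
have eB : 0 < e / B by rewrite divr_gt0.
rewrite (@powR_pos _ al gdB).
have lnA : ln (ga * expR t / B) = ln ga + t - ln B.
  by rewrite lnM ?posrE ?mulr_gt0 ?expR_gt0 ?invr_gt0 // lnM ?posrE ?expR_gt0 // expRK lnV ?posrE.
have lnB : ln (al * expR (al * ln ga)) = ln al + al * ln ga.
  by rewrite lnM ?posrE ?expR_gt0 // expRK.
have lnC : ln (e / B) = ln e - ln B.
  by rewrite lnM ?posrE ?invr_gt0 // lnV ?posrE.
have eE : e / expR t = expR (ln e - t) by rewrite expRD expRN lnK ?posrE.
rewrite (@powR_pos _ al gag).
have ag' : 0 < al * expR (al * ln ga) by rewrite mulr_gt0 // expR_gt0.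
rewrite (@powR_pos _ _ ag') (@powR_pos _ _ eB) lnA eE lnB lnC.
have k1 : ln e - t = ln al + al * (ln ga + t - ln B).
  rewrite /t; field; exact: al1.
have k2 : - (al / (al + 1)) * (ln al + al * ln ga) + al * ln ga + al / (al + 1) * (ln e - ln B)
          = al * (ln ga + t - ln B).
  rewrite /t; field; exact: al1.
rewrite k1 expRD lnK ?posrE //.
have -> : expR (- (al / (al + 1)) * (ln al + al * ln ga)) * (al + 1) *
  expR (al * ln ga) * expR (al / (al + 1) * (ln e - ln B)) =
  (al + 1) * expR (- (al / (al + 1)) * (ln al + al * ln ga) + al * ln ga + al / (al + 1) * (ln e - ln B)).
  by rewrite !expRD; ring.
rewrite k2 mulrDl mul1r; lra.
Qed.
End final.

Section meas.
Context dT (T : measurableType dT) (R : realType).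
Implicit Types (A C : set T) (f g : T -> R).

Lemma mle f g : measurable_fun setT f -> measurable_fun setT g ->
  measurable [set w | f w <= g w].
Proof. by move=> mf mg; have := measurable_fun_le measurableT mf mg; rewrite setTI. Qed.

Lemma mlt f g : measurable_fun setT f -> measurable_fun setT g ->
  measurable [set w | f w < g w].
Proof.
move=> mf mg; rewrite (_ : [set w | f w < g w] = ~` [set w | g w <= f w]).
  exact/measurableC/mle.
by apply/seteqP; split => w /=; rewrite ltNge => /negP.
Qed.

Lemma mand A C : measurable A -> measurable C -> measurable [set w | A w /\ C w].
Proof. exact: measurableI. Qed.

Lemma mnot A : measurable A -> measurable [set w | ~ A w].
Proof. exact: measurableC. Qed.

Lemma mimp A C : measurable A -> measurable C -> measurable [set w | A w -> C w].
Proof.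
move=> mA mC; rewrite (_ : [set w | A w -> C w] = ~` A `|` C).
  exact/measurableU/mC/measurableC.
apply/seteqP; split => w /=.
  by have [Aw|nAw] := pselect (A w) => h; [right; apply: h | left].
by case=> // h _.
Qed.

Lemma mP (P : Prop) A : measurable A -> measurable [set w | P /\ A w].
Proof.
move=> mA; have [p|np] := pselect P.
  by rewrite (_ : [set w | P /\ A w] = A) //; apply/seteqP; split => w /= => [[]//|].
by rewrite (_ : [set w | P /\ A w] = set0) //; apply/seteqP; split => w /= => [[]//|].
Qed.

Lemma mexV (I : eqType) (V : set I) (F : I -> set T) : finite_set V ->
  (forall i, V i -> measurable (F i)) -> measurable [set w | exists i, V i /\ F i w].
Proof.
move=> /finite_seqP [s ->]; elim: s => [|a s IH] mF.
  by rewrite (_ : [set w | _] = set0) //; apply/seteqP; split => w //= [i []].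
rewrite (_ : [set w | _] = F a `|` [set w | exists i, [set` s] i /\ F i w]).
  apply: measurableU; first by apply: mF; exact: mem_head.
  by apply: IH => i si; apply: mF; rewrite /= inE si orbT.
apply/seteqP; split => w /=.
  by move=> [i [/= /[!inE] /predU1P [->|si] Fi]]; [left | right; exists i].
by case=> [Fa|[i [si Fi]]]; [exists a; rewrite /= mem_head | exists i; rewrite /= inE si orbT].
Qed.

Lemma mallV (I : eqType) (V : set I) (F : I -> set T) : finite_set V ->
  (forall i, V i -> measurable (F i)) -> measurable [set w | forall i, V i -> F i w].
Proof.
move=> /finite_seqP [s ->]; elim: s => [|a s IH] mF.
  by rewrite (_ : [set w | _] = setT) //; apply/seteqP; split => w //= _ i.
rewrite (_ : [set w | _] = F a `&` [set w | forall i, [set` s] i -> F i w]).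
  apply: measurableI; first by apply: mF; exact: mem_head.
  by apply: IH => i si; apply: mF; rewrite /= inE si orbT.
apply/seteqP; split => w /=.
  move=> h; split; first by apply: h; exact: mem_head.
  by move=> i si; apply: h; rewrite /= inE si orbT.
by move=> [Fa h] i /= /[!inE] /predU1P [->//|si]; apply: h.
Qed.
End meas.

Lemma enormN (R : realType) n (u : 'cV[R]_n) : enorm (- u) = enorm u.
Proof. by rewrite /enorm dotvNr dotvC dotvNr opprK. Qed.

Section prob.
Context dT (T : measurableType dT) (R : realType) (P : probability T R).
Local Open Scope ereal_scope.

Lemma meq (f g : T -> R) : measurable_fun setT f -> measurable_fun setT g ->
  measurable [set w | f w = g w].
Proof.
move=> mf mg; rewrite (_ : [set w | f w = g w] = [set w | (f w <= g w)%R /\ (g w <= f w)%R]).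
  by apply: mand; apply: mle.
apply/seteqP; split => w /=; first by move=> ->; rewrite lexx.
by move=> [h1 h2]; apply/eqP; rewrite eq_le h1 h2.
Qed.

Lemma PE (Q : set T) : measurable Q -> P Q = (fine (P Q))%:E.
Proof.
move=> mQ; rewrite fineK // ge0_fin_numE ?measure_ge0 //.
by apply: le_lt_trans (probability_le1 P mQ) _; rewrite ltey.
Qed.

Lemma fineP_ge0 (Q : set T) : (0 <= fine (P Q))%R.
Proof. by apply: fine_ge0; apply: measure_ge0. Qed.

Lemma fineP_le1 (Q : set T) : measurable Q -> (fine (P Q) <= 1)%R.
Proof. by move=> mQ; rewrite -lee_fin -PE //; exact: probability_le1. Qed.

Lemma intE (Q : set T) (k : R) : measurable Q -> (0 <= k)%R ->
  \int[P]_w ((k * \1_Q w)%R)%:E = k%:E * P Q.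
Proof.
move=> mQ k0; under eq_integral do rewrite EFinM.
rewrite ge0_integralZl_EFin //=.
- by rewrite integral_indic ?setIT.
- by apply/measurable_realfun.measurable_EFinP; exact: measurable_realfun.measurable_indic.
Qed.
End prob.

Theorem lemma1 (R : realType) (dT : measure_display) (T : measurableType dT)
  (P : probability T R) (p d m : nat)
  (X : T -> 'cV[R]_p) (fstar : 'cV[R]_p -> 'cV[R]_d)
  (A : 'M[R]_(m, d)) (b : 'cV[R]_m) (B : R)
  (pistar pi : 'cV[R]_p -> 'cV[R]_d) (alpha gamma : R) :
  (* standing assumptions *)
  (forall x, enorm (fstar x) <= 1) ->
  0 < B ->
  (forall z, polytope A b z -> enorm z <= B) ->
  finite_set (extreme_points (polytope A b)) ->
  (forall i, measurable_fun setT (fun w => fstar (X w) i 0)) ->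
  (forall i, measurable_fun setT (fun w => pistar (X w) i 0)) ->
  (forall i, measurable_fun setT (fun w => pi (X w) i 0)) ->
  (forall x, extreme_points (polytope A b) (pistar x) /\
             argminZ (polytope A b) (fstar x) (pistar x)) ->
  (forall x, extreme_points (polytope A b) (pi x)) ->
  (* hypotheses of the lemma *)
  0 <= alpha -> 0 <= gamma ->
  (forall delta : R, 0 < delta ->
     (P [set w | (0 < gap (polytope A b) (fstar (X w)) <= delta)%R]
      <= (powR (gamma * delta / B) alpha)%:E)%E) ->
  P [set w | exists z1 z2, argminZ (polytope A b) (fstar (X w)) z1 /\
                           argminZ (polytope A b) (fstar (X w)) z2 /\ z1 <> z2]
    = 0%E ->
  let dist := fine ('E_P[fun w => dotv (fstar (X w)) (pi (X w) - pistar (X w))%R])%E / B in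
  let dDelta := fine (P [set w | pistar (X w) <> pi (X w)]) in
  let c1 := powR (alpha * powR gamma alpha) (- (alpha / (alpha + 1)))
            * (alpha + 1) * powR gamma alpha in
  dist <= 2 * dDelta /\ dDelta <= c1 * powR dist (alpha / (alpha + 1)).
Proof.
move=> hf B0 hB fin mf mps mpi hps hpi al0 ga0 noise uniq dist dDelta c1.
set Z := polytope A b in hB fin hps hpi noise uniq.
set V := extreme_points Z in fin hps hpi.
pose c w := fstar (X w).
pose k (v : 'cV[R]_d) w := dotv (c w) v.
have mk v : measurable_fun setT (k v).
  rewrite /k /dotv; apply: measurable_sum => i; apply: measurable_funM.
    exact: mf.
  exact: measurable_cst.
pose h w := dotv (c w) (pi (X w) - pistar (X w)).
have hE w : h w = k (pi (X w)) w - k (pistar (X w)) w by rewrite /h /k dotvBr.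
have mh : measurable_fun setT h.
  have -> : h = fun w => \sum_(i < d) (fstar (X w) i 0 * (pi (X w) i 0 - pistar (X w) i 0)).
    by apply/funext => w; rewrite /h /dotv; apply: eq_bigr => i _; rewrite !mxE.
  apply: measurable_sum => i; apply: measurable_funM; first exact: mf.
  exact: measurable_funB.
have h0 w : 0 <= h w.
  rewrite hE subr_ge0; have [_ [_ op]] := hps (X w); apply: op; exact: VZ (hpi _).
have hS w : h w <= 2 * B * \1_[set w | pistar (X w) <> pi (X w)] w.
  have [ne|/contrapT eq] := pselect (pistar (X w) <> pi (X w)); last first.
    by rewrite hE eq subrr indicE memNset ?mulr0 //= => /(_ eq).
  rewrite indicE mem_set // mulr1 hE.
  have h1 : k (pi (X w)) w <= B by apply: dot_bound => //; [exact: hf | apply: hB; apply: VZ (hpi _)].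
  have h2 : k (- pistar (X w)) w <= B.
    apply: dot_bound => //; first exact: hf.
    rewrite enormN; apply: hB; apply: VZ; exact: (hps _).1.
  move: h1 h2; rewrite /k dotvNr; lra.
have mopt v : measurable [set w | Vopt A b (c w) v].
  rewrite /Vopt; apply: mP; eapply mallV; first exact: fin.
  move=> v' _; exact: (mle (mk v) (mk v')).
pose S := [set w | pistar (X w) <> pi (X w)].
have mS : measurable S.
  rewrite (_ : S = [set w | exists i, [set` enum 'I_d] i /\ ~ (pistar (X w) i 0 = pi (X w) i 0)]).
    eapply mexV; first by apply/finite_seqP; eexists.
    by move=> i _; apply: mnot; apply: meq.
  apply/seteqP; split => w /=.
    move=> ne; apply/not_existsP => H; apply: ne; apply/matrixP => i j.
    rewrite ord1; apply: contrapT => nij; apply: (H i); split => //; exact: mem_enum.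
  by move=> [i [_ nij]] E; apply: nij; rewrite E.
pose U := [set w | exists z1 z2, argminZ Z (c w) z1 /\ argminZ Z (c w) z2 /\ z1 <> z2].
have mU : measurable U.
  rewrite (_ : U = [set w | exists v1, V v1 /\ exists v2, V v2 /\ (v1 <> v2 /\ (Vopt A b (c w) v1 /\ Vopt A b (c w) v2))]).
    eapply mexV; first exact: fin.
    move=> v1 _; eapply mexV; first exact: fin.
    move=> v2 _; apply: mP; apply: mand; exact: mopt.
  apply/seteqP; split => w /= H.
    have [v1 [v2 [q1 [q2 ne]]]] := proj1 (U_char hB (c w)) H.
    by exists v1; split; [case: q1 | exists v2; split; [case: q2 | ]].
  apply/(U_char hB (c w)); move: H => [v1 [_ [v2 [_ [ne [q1 q2]]]]]].
  by exists v1, v2.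
pose G dl := [set w | (0 < gap Z (c w) <= dl)%R].
have mG dl : measurable (G dl).
  rewrite (_ : G dl = [set w | exists v0, V v0 /\ exists v1, V v1 /\
     (Vopt A b (c w) v0 /\ (~ Vopt A b (c w) v1 /\
     ((forall v, V v -> (~ Vopt A b (c w) v -> k v1 w <= k v w)) /\
      (0 < k v1 w - k v0 w /\ k v1 w - k v0 w <= dl))))]).
    eapply mexV; first exact: fin.
    move=> v0 _; eapply mexV; first exact: fin.
    move=> v1 _; apply: mand; first exact: mopt.
    apply: mand; first exact/mnot/mopt.
    apply: mand.
      eapply mallV; first exact: fin.
      by move=> v _; apply: mimp; [exact/mnot/mopt | exact: (mle (mk v1) (mk v))].
    apply: mand.
      by apply: (mlt (measurable_cst _)); exact: measurable_funB.
    by apply: mle; [exact: measurable_funB | exact: measurable_cst].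
  apply/seteqP; split => w /=.
    move=> /andP [g0 gd].
    have [allo|] := pselect (forall v, V v -> Vopt A b (c w) v).
      have g00 : gap Z (c w) = 0 := gap_allopt hB allo.
      by move: g0; rewrite g00 ltxx.
    move=> /existsNP [v /not_implyP [Vv nv]].
    have [v0 [v1 [q0 [V1 [n1 [m1 ge]]]]]] := gap_char hB fin Vv nv.
    exists v0; split; first by case: q0.
    exists v1; split => //; split => //; split => //; split => //.
    have ge' : gap Z (c w) = k v1 w - k v0 w := ge.
    by split; rewrite -ge'.
  move=> [v0 [V0 [v1 [V1 [q0 [n1 [m1 [p1 p2]]]]]]]].
  have [v0' [v1' [q0' [V1' [n1' [m1' ge]]]]]] := gap_char hB fin V1 n1.
  have e0 : k v0' w = k v0 w.
    apply/eqP; rewrite eq_le; apply/andP; split.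
      by case: q0' => _; apply.
    by case: q0 => _; apply; case: q0'.
  have e1 : k v1' w = k v1 w.
    apply/eqP; rewrite eq_le; apply/andP; split; first exact: m1'.
    exact: m1.
  have ge' : gap Z (c w) = k v1' w - k v0' w := ge.
  by rewrite /G /= ge' e0 e1 p1 p2.
pose M dl := [set w | dl < h w].
have mM dl : measurable (M dl) by apply: mlt => //; exact: measurable_cst.
have incl dl : 0 < dl -> S `<=` U `|` G dl `|` M dl.
  move=> dl0 w Sw; have [Uw|nU] := pselect (U w); first by left; left.
  have [Vps ops] := hps (X w).
  have nopt : ~ Vopt A b (c w) (pi (X w)).
    move=> /(Vopt_argmin hB (c w) (hpi _)) opi; apply: nU.
    by exists (pistar (X w)), (pi (X w)); split => //; split => //; apply: nesym.
  have [v0 [v1 [q0 [V1 [n1 [m1 ge]]]]]] := gap_char hB fin (hpi (X w)) nopt.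
  have ge' : gap Z (c w) = k v1 w - k v0 w := ge.
  have gpos : 0 < k v1 w - k v0 w by rewrite subr_gt0; exact: nVopt_gt q0 V1 n1.
  have V0 : V v0 by case: q0.
  have a0 := proj1 (Vopt_argmin hB (c w) V0) q0.
  have e0 : k v0 w = k (pistar (X w)) w.
    apply/eqP; rewrite eq_le; apply/andP; split.
      by case: a0 => _; apply; exact: VZ.
    by case: ops => _; apply; exact: VZ.
  have le1 : k v1 w <= k (pi (X w)) w := m1 _ (hpi _) nopt.
  have gh : gap Z (c w) <= h w by rewrite ge' hE; lra.
  case: (lerP (gap Z (c w)) dl) => gd.
    by left; right; rewrite /G /= gd ge' gpos.
  by right; rewrite /M /=; exact: lt_le_trans gd gh.
have PSle dl : 0 < dl -> (P S <= P U + P (G dl) + P (M dl))%E.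
  move=> dl0.
  have mUG : measurable (U `|` G dl) by apply: measurableU.
  have le1 : (P S <= P (U `|` G dl `|` M dl))%E.
    apply: le_measure; rewrite ?inE //; last exact: incl.
    exact: measurableU.
  apply: (le_trans le1); apply: (le_trans (measureU2 P mUG (mM dl))).
  by apply: leeD2r; exact: measureU2.
pose E := (\int[P]_w (h w)%:E)%E.
have EE : ('E_P[fun w => dotv (fstar (X w)) (pi (X w) - pistar (X w))])%E = E.
  by rewrite unlock.
have mhE : measurable_fun setT (fun w => (h w)%:E).
  by apply/measurable_realfun.measurable_EFinP.
have E0 : (0 <= E)%E by apply: integral_ge0 => w _; rewrite lee_fin.
have EleS : (E <= (2 * B)%:E * P S)%E.
  rewrite -intE //; last by rewrite mulr_ge0 // ltW.
  apply: ge0_le_integral => //.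
  - by move=> w _; rewrite lee_fin.
  - apply/measurable_realfun.measurable_EFinP; apply: measurable_funM.
      exact: measurable_cst.
    exact: measurable_realfun.measurable_indic.
  - by move=> w _; rewrite lee_fin.
have EM dl : 0 < dl -> (dl%:E * P (M dl) <= E)%E.
  move=> dl0; rewrite -intE //; last exact: ltW.
  apply: ge0_le_integral => //.
  - by move=> w _; rewrite lee_fin mulr_ge0 // ?ltW.
  - apply/measurable_realfun.measurable_EFinP; apply: measurable_funM.
      exact: measurable_cst.
    exact: measurable_realfun.measurable_indic.
  - move=> w _; rewrite lee_fin indicE; case: (boolP (w \in M dl)) => [/set_mem Mw|_].
      by rewrite mulr1 ltW.
    by rewrite mulr0.
have PSE := PE P mS.
have Efin : E = (fine E)%:E.
  rewrite fineK // ge0_fin_numE //; apply: le_lt_trans EleS _.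
  by rewrite PSE -EFinM ltey.
set e := fine E in Efin.
set pS := fine (P S) in PSE.
have hdD : dDelta = pS by [].
have hdist : dist = e / B by rewrite /dist EE.
have e0 : 0 <= e by rewrite -lee_fin -Efin.
have epS : e <= 2 * B * pS by rewrite -lee_fin -Efin EFinM -PSE.
split.
  by rewrite hdist hdD ler_pdivrMr //; nra.
rewrite hdD hdist /c1; apply: final => //.
- by rewrite fineP_ge0 fineP_le1.
- move=> dl dl0.
  have h1 := PSle dl dl0.
  have h2 : (P (G dl) <= (powR (gamma * dl / B) alpha)%:E)%E := noise dl dl0.
  have h3 := EM dl dl0.
  rewrite PSE (PE P (mG dl)) (PE P (mM dl)) uniq add0e -EFinD lee_fin in h1.
  rewrite (PE P (mG dl)) lee_fin in h2.
  rewrite (PE P (mM dl)) Efin -EFinM lee_fin in h3.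
  have : fine (P (M dl)) <= e / dl by rewrite ler_pdivlMr // mulrC.
  lra.
Qed.
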